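(* Let $G$ be a group with normal subgroups $H_1$ and $H_2$ such that $H_1$ has order $2$, $G/H_1$ has exponent $2$, and $G/H_2\cong\mathbb{Z}/4\mathbb{Z}$. Then $G$ is abelian. *)

(* Defs.v *)
From HB Require Import structures.
From mathcomp Require Import all_boot all_algebra.
From mathcomp Require Import monoid.

Set Implicit Arguments.
Unset Strict Implicit.
Unset Printing Implicit Defensive.

Local Open Scope group_scope.

Definition is_subgroup (G : groupType) (H : G -> Prop) : Prop :=
  H 1 /\ (forall x y, H x -> H y -> H (x * y^-1)).

Definition is_normal (G : groupType) (H : G -> Prop) : Prop :=
  is_subgroup H /\ (forall x g, H x -> H (x ^ g)).

Definition has_order2 (G : groupType) (H : G -> Prop) : Prop :=
  exists a b : G, a <> b /\ (forall x, H x <-> (x = a \/ x = b)).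

(* The quotient G/H (H normal) has exponent exactly 2:
   every coset gH satisfies (gH)^2 = H, i.e. g^2 \in H, and G/H is
   nontrivial (some coset differs from H), so the exponent is 2, not 1. *)
Definition quotient_exponent2 (G : groupType) (H : G -> Prop) : Prop :=
  (forall g : G, H (g ^+ 2)) /\ (exists g : G, ~ H g).

(* G/H is isomorphic to Z/4Z: there is a map f : G -> Z/4 which induces a
   well-defined, injective map on the cosets gH (f x = f y <-> x^-1 y \in H),
   is a group homomorphism and is surjective; i.e. the induced map
   G/H -> Z/4 is a group isomorphism. *)
Definition quotient_iso_Z4 (G : groupType) (H : G -> Prop) : Prop :=
  exists f : G -> 'Z_4,
    (forall x y : G, f (x * y) = (f x + f y)%R) /\
    (forall x y : G, f x = f y <-> H (x^-1 * y)) /\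
    (forall z : 'Z_4, exists x : G, f x = z).

Definition is_abelian (G : groupType) : Prop :=
  forall x y : G, x * y = y * x.

(* Main.v *)
Require Import Defs.
From HB Require Import structures.
From mathcomp Require Import all_boot all_algebra.
From mathcomp Require Import monoid.

Local Open Scope group_scope.

Theorem lemma4p1 (G : groupType) (H1 H2 : G -> Prop) :
  is_normal H1 -> is_normal H2 ->
  has_order2 H1 -> quotient_exponent2 H1 -> quotient_iso_Z4 H2 ->
  is_abelian G.
Proof.
move=> [[H11 Hdiv] Hconj] _ [a [b [ab Hab]]] [Hsq _] [f [fM [finj fsurj]]].
have HV x : H1 x -> H1 x^-1 by move=> Hx; have := Hdiv 1 x H11 Hx; rewrite mul1g.
have HM x y : H1 x -> H1 y -> H1 (x * y).
  by move=> Hx Hy; have := Hdiv x y^-1 Hx (HV _ Hy); rewrite invgK.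
have f1 : f 1 = 0%R.
  have := fM 1 1; rewrite mulg1 => e.
  by apply: (GRing.addrI (f 1)); rewrite GRing.addr0 -e.
have [g fg] := fsurj 1%R.
set z := g ^+ 2.
have fz : f z = 2%R by rewrite /z expg2 fM fg.
have z1 : z <> 1 by move=> e; move: fz; rewrite e f1.
have Hz : H1 z := Hsq g.
have Hw w : H1 w -> f w = 0%R -> w = 1.
  move=> Hw fw.
  have : w = 1 \/ w = z.
    move: (proj1 (Hab _) Hw) (proj1 (Hab _) H11) (proj1 (Hab _) Hz).
    case=> e1 [] e2 [] e3; first [by left; congruence | by right; congruence | by exfalso; congruence].
  by case=> // e; move: fw; rewrite e fz.
move=> x y.
set k := y * x * (x * y)^-1.
have ke : k = (y * x) ^+ 2 * (x^-1 * ((y ^+ 2)^-1 * x)) * (x ^+ 2)^-1.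
  by rewrite /k !expg2 !invgM !mulgA !mulgK.
have Hk : H1 k.
  rewrite ke; apply: (HM); [apply: (HM); [exact: Hsq|] | exact: (HV _ (Hsq _))].
  exact: (Hconj _ x (HV _ (Hsq y))).
have fk : f k = 0%R.
  have := fM k (x * y); rewrite /k mulgVK !fM => e.
  apply: (GRing.addIr (f x + f y)%R); rewrite GRing.add0r -e.
  exact: GRing.addrC.
have := Hw _ Hk fk; rewrite /k => /eqP; rewrite (@divg_eq1 G) => /eqP <-.
done.
Qed.
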